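(* Let $\mathcal{X}=\mathcal{X}^{(1)}\times\cdots\times\mathcal{X}^{(d)}$ with each $\mathcal{X}^{(j)}$ finite, $(S_i)_{i=1}^n$ a partition of $\{1,\dots,d\}$ into pairwise disjoint nonempty sets, $\pi\in\mathcal{P}(\mathcal{X})$ positive and $P\in\mathcal{L}(\mathcal{X})$. Then $\mathbb{I}^\pi(P)=\mathbb{I}^\pi(P,\mathcal{L}_{\otimes_{i=1}^nS_i}(\mathcal{X}))+\mathbb{I}^\pi(\otimes_{i=1}^nP^{(S_i)}_\pi)=\mathbb{I}^\pi(P,\mathcal{L}_{\otimes_{i=1}^nS_i}(\mathcal{X}))+\sum_{i=1}^n\mathbb{I}^{\pi^{(S_i)}}(P^{(S_i)}_\pi)$.
   Context: $D_{KL}^{\pi}(M\|L):=\sum_{x,y}\pi(x)M(x,y)\ln\frac{M(x,y)}{L(x,y)}$. For $S\subseteq\{1,\dots,d\}$: $\mathcal{X}^{(S)}=\prod_{j\in S}\mathcal{X}^{(j)}$, $\pi^{(S)}(x^{(S)})=\sum_{x^{(-S)}}\pi(x)$, $P^{(S)}_\pi(x^{(S)},y^{(S)}):=\frac{\sum_{x^{(-S)},y^{(-S)}}\pi(x)P(x,y)}{\pi^{(S)}(x^{(S)})}$. Tensor products: $(\otimes_iL_i)(x,y)=\prod_iL_i(x^{(S_i)},y^{(S_i)})$. $\mathcal{L}_{\otimes_{i=1}^nS_i}(\mathcal{X})$ is the set of transition matrices of the form $\otimes_{i=1}^nL_i$ with $L_i\in\mathcal{L}(\mathcal{X}^{(S_i)})$,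 and $\mathbb{I}^\pi(P,\mathcal{L}_{\otimes_{i=1}^nS_i}(\mathcal{X})):=\min_{L_i\in\mathcal{L}(\mathcal{X}^{(S_i)})}D^\pi_{KL}(P\|\otimes_{i=1}^nL_i)$. For $\mu$ on $\prod_{j\in T}\mathcal{X}^{(j)}$ and $Q$ a transition matrix there, the distance to independence is $\mathbb{I}^\mu(Q):=\min_{L_j\in\mathcal{L}(\mathcal{X}^{(j)}),j\in T}D^\mu_{KL}(Q\|\otimes_{j\in T}L_j)$. *)

(* Defs.v *)
From HB Require Import structures.
From mathcomp Require Import all_boot all_order all_algebra.
From mathcomp Require Import boolp classical_sets reals constructive_ereal ereal exp.
Set Implicit Arguments. Unset Strict Implicit. Unset Printing Implicit Defensive.
Import Order.TTheory GRing.Theory Num.Theory.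
Local Open Scope ring_scope.

Section Defs.
Variable R : realType.

Definition prodT (I : finType) (Y : I -> finType) := {dffun forall i : I, Y i}.

Definition subT (I : finType) (S : {set I}) := {j : I | j \in S}.
Definition XS (I : finType) (Y : I -> finType) (S : {set I}) :=
  prodT (fun j : subT S => Y (val j)).

Definition restr (I : finType) (Y : I -> finType) (S : {set I}) (x : prodT Y)
  : XS Y S := @finfun _ (fun j : subT S => Y (val j)) (fun j => x (val j)).

Definition is_distr (T : finType) (mu : T -> R) :=
  (forall x, 0 <= mu x) /\ \sum_(x : T) mu x = 1.
Definition is_pos (T : finType) (mu : T -> R) := forall x, 0 < mu x.
Definition is_trans (T : finType) (L : T -> T -> R) :=
  (forall x y, 0 <= L x y) /\ (forall x, \sum_(y : T) L x y = 1).

Definition KL (T : finType) (pi : T -> R) (M L : T -> T -> R) : \bar R :=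
  (\sum_(x : T) \sum_(y : T)
     (if (pi x * M x y == 0)%R then 0%E
      else if (L x y == 0)%R then +oo%E
      else ((pi x * M x y * ln (M x y / L x y))%R)%:E))%E.

Definition tensor (I : finType) (Y : I -> finType) (n : nat) (S : 'I_n -> {set I})
  (Ls : forall i : 'I_n, XS Y (S i) -> XS Y (S i) -> R) : prodT Y -> prodT Y -> R :=
  fun x y => \prod_(i < n) Ls i (restr (S i) x) (restr (S i) y).

Definition Ipart (I : finType) (Y : I -> finType) (pi : prodT Y -> R)
  (P : prodT Y -> prodT Y -> R) (n : nat) (S : 'I_n -> {set I}) : \bar R :=
  ereal_inf [set KL pi P (tensor Ls) | Ls in
     [set Ls : forall i : 'I_n, XS Y (S i) -> XS Y (S i) -> R |
        forall i, is_trans (Ls i)]]%classic.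

Definition Idep (I : finType) (Y : I -> finType) (mu : prodT Y -> R)
  (Q : prodT Y -> prodT Y -> R) : \bar R :=
  ereal_inf [set KL mu Q (fun x y => \prod_(i : I) Ls i (x i) (y i)) | Ls in
     [set Ls : forall i : I, Y i -> Y i -> R | forall i, is_trans (Ls i)]]%classic.

Definition marg (I : finType) (Y : I -> finType) (pi : prodT Y -> R) (S : {set I})
  : XS Y S -> R := fun xs => \sum_(x : prodT Y | restr S x == xs) pi x.

Definition kmarg (I : finType) (Y : I -> finType) (pi : prodT Y -> R)
  (P : prodT Y -> prodT Y -> R) (S : {set I}) : XS Y S -> XS Y S -> R :=
  fun xs ys => (\sum_(x : prodT Y | restr S x == xs)
                 \sum_(y : prodT Y | restr S y == ys) pi x * P x y) / @marg I Y pi S xs.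

Definition is_partition (I : finType) (n : nat) (S : 'I_n -> {set I}) :=
  (forall i, S i != finset.set0) /\ (forall i j, i != j -> [disjoint S i & S j]) /\
  (forall k : I, exists i, k \in S i).

End Defs.
Arguments restr {I Y} S x.
Arguments marg {R I Y} pi S.
Arguments kmarg {R I Y} pi P S.
Arguments Ipart {R I Y} pi P {n} S.

(* Main.v *)
Require Import Defs.
From HB Require Import structures.
From mathcomp Require Import all_boot all_order all_algebra.
From mathcomp Require Import boolp classical_sets reals constructive_ereal ereal exp.
From mathcomp Require Import lra.
Set Implicit Arguments. Unset Strict Implicit. Unset Printing Implicit Defensive.
Import Order.TTheory GRing.Theory Num.Theory.
Local Open Scope ring_scope.

Lemma prod_sum_dep (R : comNzRingType) (I : finType) (T_ : I -> finType)
  (g : forall i, T_ i -> R) :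
  \sum_(f : {dffun forall i, T_ i}) \prod_i g i (f i) = \prod_i \sum_(t : T_ i) g i t.
Proof.
transitivity (\prod_i \sum_(j in tagged_with T_ i) untag 0 (g i) j); last first.
  by apply: eq_bigr => i _; rewrite big_tag.
rewrite bigA_distr_big_dep.
have := @big_fprod R 0 1 *%R +%R I T_ (fun i => [ffun t => g i t]).
rewrite /= => H.
have E (i : I) (u : {i : I & T_ i}) : untag 0 (g i) u = untag 0 [ffun t => g i t] u.
  by rewrite /untag; case: eqP => // e; rewrite ffunE.
transitivity (\sum_(g0 in family (tagged_with T_)) \prod_i untag 0 [ffun t => g i t] (g0 i)); last first.
  apply: eq_big => [f|f _] //.
  by apply: eq_bigr => i _; rewrite E.
rewrite -H.
rewrite (reindex (@dffun_of_fprod I T_)); last exact/onW_bij/dffun_of_fprod_bij.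
apply: eq_bigr => t _; apply: eq_bigr => i _; by rewrite !ffunE.
Qed.

Section Gen.
Variable R : realType.

Definition KLr (T : finType) (mu : T -> R) (M L : T -> T -> R) : R :=
  \sum_x \sum_y mu x * M x y * ln (M x y / L x y).

Lemma KL_fin (T : finType) (mu : T -> R) M L :
  (forall x y, mu x * M x y != 0 -> L x y != 0) -> KL mu M L = (KLr mu M L)%:E.
Proof.
move=> H; rewrite /KL /KLr -sumEFin; apply: eq_bigr => x _.
rewrite -sumEFin; apply: eq_bigr => y _.
case: eqP => [->|/eqP h]; first by rewrite mul0r.
by rewrite (negbTE (H _ _ h)).
Qed.

Lemma sum_nNy (I : finType) (P : pred I) (F : I -> \bar R) :
  (forall i, F i != -oo%E) -> (\sum_(i | P i) F i != -oo)%E.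
Proof.
move=> h; apply: (big_ind (fun e : \bar R => e != -oo%E)) => // a b; case: a => [a| |] //; case: b => [b| |] // *.
Qed.

Lemma KL_inf (T : finType) (mu : T -> R) M L x0 y0 :
  mu x0 * M x0 y0 != 0 -> L x0 y0 = 0 -> KL mu M L = +oo%E.
Proof.
move=> h0 l0.
have tn (x y : T) : (if mu x * M x y == 0 then 0%E else if L x y == 0 then +oo%E
      else ((mu x * M x y * ln (M x y / L x y)))%:E) != -oo%E.
  by case: (mu x * M x y == 0); case: (L x y == 0).
rewrite /KL (bigD1 x0) //= (bigD1 y0) //= (negbTE h0) l0 eqxx addye ?addye //.
  by apply: sum_nNy => x; apply: sum_nNy.
by apply: sum_nNy.
Qed.

Lemma inf_eq (S : set (\bar R)) v : S v -> (forall y, S y -> (v <= y)%E) ->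
  ereal_inf S = v.
Proof.
move=> Sv h; apply/le_anti/andP; split; first exact: ereal_inf_lbound.
by apply: le_ereal_inf_tmp => y; apply: h.
Qed.

Lemma ln_prod (I : finType) (F : I -> R) : (forall i, 0 < F i) ->
  ln (\prod_i F i) = \sum_i ln (F i).
Proof.
move=> h.
suff [] : 0 < \prod_i F i /\ ln (\prod_i F i) = \sum_i ln (F i) by [].
apply: (big_ind2 (fun a b => 0 < a /\ ln a = b)) => //.
- by rewrite ln1.
- by move=> a1 b1 a2 b2 [p1 <-] [p2 <-]; split; [exact: mulr_gt0 | rewrite lnM].
Qed.

Lemma ln_le_sub1 (x : R) : 0 < x -> ln x <= x - 1.
Proof.
move=> x0; have e : 1 + (x - 1) = x by rewrite addrC subrK.
have := @le_ln1Dx R (x - 1); rewrite e; apply.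
by rewrite -(ltrD2r 1) subrK addrC subrr.
Qed.


Section Blocks.
Variables (T K : finType) (U : K -> finType) (r : forall k, T -> U k).

Definition mg (mu : T -> R) k (u : U k) : R := \sum_(x | r k x == u) mu x.
Definition Fs (mu : T -> R) (M : T -> T -> R) k (u v : U k) : R :=
  \sum_(x | r k x == u) \sum_(y | r k y == v) mu x * M x y.
Definition km mu M k (u v : U k) : R := Fs mu M u v / mg mu u.
Definition tens (Ls : forall k, U k -> U k -> R) : T -> T -> R :=
  fun x y => \prod_k Ls k (r k x) (r k y).

Lemma grp1 k (f : T -> R) (g : U k -> R) :
  \sum_x f x * g (r k x) = \sum_u (\sum_(x | r k x == u) f x) * g u.
Proof.
rewrite (partition_big (r k) predT) //=; apply: eq_bigr => u _.
rewrite big_distrl /=; apply: eq_bigr => x /eqP <-; done.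
Qed.

Lemma grp k (phi : U k -> U k -> R) mu M :
  \sum_x \sum_y mu x * M x y * phi (r k x) (r k y) =
  \sum_u \sum_v Fs mu M u v * phi u v.
Proof.
symmetry; transitivity (\sum_u \sum_v \sum_(x | r k x == u)
    \sum_(y | r k y == v) mu x * M x y * phi u v).
  apply: eq_bigr => u _; apply: eq_bigr => v _; rewrite /Fs big_distrl.
  by apply: eq_bigr => x _; rewrite big_distrl.
rewrite [RHS](partition_big (r k) predT) //=; apply: eq_bigr => u _.
rewrite exchange_big; apply: eq_bigr => x /eqP <-.
rewrite [RHS](partition_big (r k) predT) //=; apply: eq_bigr => v _.
by apply: eq_bigr => y /eqP <-.
Qed.

Lemma Fs_rows mu M k (u : U k) : (forall x, \sum_y M x y = 1) ->
  \sum_v Fs mu M u v = mg mu u.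
Proof.
move=> hM; rewrite /Fs exchange_big /mg; apply: eq_bigr => x _.
transitivity (\sum_y mu x * M x y); last by rewrite -big_distrr /= hM mulr1.
by rewrite [RHS](partition_big (r k) predT).
Qed.

Lemma sum_ge_term (I : finType) (P : pred I) (F : I -> R) i :
  (forall j, 0 <= F j) -> P i -> F i <= \sum_(j | P j) F j.
Proof.
move=> h Pi; rewrite (bigD1 i) //= lerDl; apply: sumr_ge0 => j _; exact: h.
Qed.

Lemma mg_ge mu k x : (forall x, 0 <= mu x) -> mu x <= mg mu (r k x).
Proof. by move=> h; apply: sum_ge_term. Qed.

Lemma Fs_ge mu M k x y : (forall x, 0 <= mu x) -> (forall x y, 0 <= M x y) ->
  mu x * M x y <= Fs mu M (r k x) (r k y).
Proof.
move=> h1 h2; rewrite /Fs.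
apply: (@le_trans _ _ (\sum_(y' | r k y' == r k y) mu x * M x y')).
    by apply: (@sum_ge_term T (fun y' => r k y' == r k y) (fun y' => mu x * M x y') y) => // y'; apply: mulr_ge0.
apply: (@sum_ge_term T (fun x' => r k x' == r k x) (fun x' => \sum_(y' | r k y' == r k y) mu x' * M x' y') x) => // x'.
by apply: sumr_ge0 => y' _; apply: mulr_ge0.
Qed.

Lemma mg_ge0 mu k (u : U k) : (forall x, 0 <= mu x) -> 0 <= mg mu u.
Proof. by move=> h; apply: sumr_ge0. Qed.

Lemma Fs_ge0 mu M k (u v : U k) : (forall x, 0 <= mu x) -> (forall x y, 0 <= M x y) ->
  0 <= Fs mu M u v.
Proof. by move=> h1 h2; do 2 apply: sumr_ge0 => ? _; apply: mulr_ge0. Qed.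

Lemma km_ge0 mu M k (u v : U k) : (forall x, 0 <= mu x) -> (forall x y, 0 <= M x y) ->
  0 <= km mu M u v.
Proof. by move=> h1 h2; apply: divr_ge0; [apply: Fs_ge0|apply: mg_ge0]. Qed.

Lemma mg_km mu M k (u v : U k) : (forall x, 0 <= mu x) -> (forall x y, 0 <= M x y) ->
  mg mu u * km mu M u v = Fs mu M u v.
Proof.
move=> h1 h2; rewrite /km; have [m0|m0] := eqVneq (mg mu u) 0.
  rewrite m0 mul0r /Fs big1 // => x /eqP rx.
  have : mu x = 0.
    move/eqP: m0; rewrite /mg psumr_eq0; last by move=> ? _; apply: h1.
    by move/allP => /(_ x (mem_index_enum _)); rewrite rx eqxx /= => /eqP.
  by move=> ->; apply: big1 => y _; rewrite mul0r.
by rewrite mulrC divfK.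
Qed.

Lemma km_pos mu M k x y : (forall x, 0 <= mu x) -> (forall x y, 0 <= M x y) ->
  mu x * M x y != 0 -> 0 < km mu M (r k x) (r k y).
Proof.
move=> h1 h2 h; have p : 0 < mu x * M x y.
  by rewrite lt0r h /=; apply: mulr_ge0.
apply: divr_gt0.
  by apply: (lt_le_trans p); apply: Fs_ge.
have mx : 0 < mu x by rewrite lt0r h1 andbT; apply: contraNneq h => ->; rewrite mul0r.
by apply: (lt_le_trans mx); apply: mg_ge.
Qed.

Lemma km_rows mu M k (u : U k) : (forall x, \sum_y M x y = 1) ->
  mg mu u != 0 -> \sum_v km mu M u v = 1.
Proof. by move=> h m0; rewrite /km -big_distrl /= Fs_rows // divff. Qed.

Definition kmT mu M k (u v : U k) : R :=
  if mg mu u == 0 then (v == u)%:R else km mu M u v.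

Lemma kmT_trans mu M k : (forall x, 0 <= mu x) -> is_trans M ->
  is_trans (kmT mu M (k:=k)).
Proof.
move=> h1 [h2 h3]; split.
  by move=> u v; rewrite /kmT; case: ifP => _; [apply: ler0n | apply: km_ge0].
move=> u; rewrite /kmT; have [m0|m0] := eqVneq (mg mu u) 0.
  by rewrite (bigD1 u) //= eqxx big1 ?addr0 // => v /negbTE ->.
by rewrite /km -big_distrl /= Fs_rows // divff.
Qed.

Lemma tens_kmT mu M x y : (forall x, 0 <= mu x) -> (forall x y, 0 <= M x y) ->
  mu x * M x y != 0 -> tens (kmT mu M) x y = tens (km mu M) x y.
Proof.
move=> h1 h2 h; apply: eq_bigr => k _; rewrite /kmT ifN //.
by have := km_pos k h1 h2 h; rewrite /km; apply: contraTneq => ->; rewrite invr0 mulr0 ltxx.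
Qed.


Lemma Fs_wit mu M k (u v : U k) : Fs mu M u v != 0 ->
  exists x y, [/\ r k x = u, r k y = v & mu x * M x y != 0].
Proof.
move=> F0.
case: (pickP (fun p : T * T => (r k p.1 == u) && (r k p.2 == v) && (mu p.1 * M p.1 p.2 != 0))).
  by move=> [x y] /= /andP[/andP[/eqP rx /eqP ry] hxy]; exists x, y.
move=> H; move: F0; rewrite /Fs big1 ?eqxx // => x rx; rewrite big1 // => y ry.
by have := H (x, y); rewrite /= rx ry /= => /negbFE/eqP.
Qed.

Lemma KLr_blk mu M k (Ls : U k -> U k -> R) :
  (forall x, 0 <= mu x) -> (forall x y, 0 <= M x y) ->
  (forall x y, mu x * M x y != 0 -> 0 < Ls (r k x) (r k y)) ->
  KLr (@mg mu k) (@km mu M k) Ls =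
  \sum_u \sum_v Fs mu M u v * (ln (km mu M u v) - ln (Ls u v)).
Proof.
move=> h1 h2 hp; apply: eq_bigr => u _; apply: eq_bigr => v _.
rewrite mg_km //; have [F0|F0] := eqVneq (Fs mu M u v) 0; first by rewrite F0 !mul0r.
have [x [y [rx ry hxy]]] := Fs_wit F0.
have hl : 0 < Ls u v by rewrite -rx -ry; apply: hp.
have hk : 0 < km mu M u v by rewrite -rx -ry; apply: km_pos.
by rewrite ln_div ?posrE.
Qed.

Lemma prod_pos (I : finType) (F : I -> R) : (forall i, 0 < F i) -> 0 < \prod_i F i.
Proof. by move=> h; apply: prodr_gt0 => i _. Qed.

Lemma pyth mu M (Ls : forall k, U k -> U k -> R) :
  (forall x, 0 <= mu x) -> (forall x y, 0 <= M x y) ->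
  (forall x y, mu x * M x y != 0 -> forall k, 0 < Ls k (r k x) (r k y)) ->
  KLr mu M (tens Ls) = KLr mu M (tens (km mu M)) +
    \sum_k KLr (@mg mu k) (@km mu M k) (Ls k).
Proof.
move=> h1 h2 hp.
rewrite (eq_bigr (fun k => \sum_x \sum_y mu x * M x y *
   (ln (km mu M (r k x) (r k y)) - ln (Ls k (r k x) (r k y))))); last first.
  move=> k _; rewrite KLr_blk //; last by move=> x y h; apply: hp.
  by symmetry; apply: (grp (k:=k) (fun u v => ln (km mu M u v) - ln (Ls k u v))).
rewrite exchange_big /KLr -big_split; apply: eq_bigr => x _ /=.
rewrite exchange_big -big_split; apply: eq_bigr => y _ /=.
rewrite -big_distrr -mulrDr /=.
have [h0|h0] := eqVneq (mu x * M x y) 0; first by rewrite h0 !mul0r.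
congr (_ * _).
have hM : 0 < M x y.
  by rewrite lt0r h2 andbT; apply: contraNneq h0 => ->; rewrite mulr0.
have t1 : 0 < tens Ls x y by apply: prod_pos => k; apply: hp.
have t2 : 0 < tens (km mu M) x y by apply: prod_pos => k; apply: km_pos.
rewrite !ln_div ?posrE // /tens !ln_prod //.
all: try by move=> k; first [apply: hp | apply: km_pos].
by rewrite sumrB addrA subrK.
Qed.

Lemma gibbs mu M k (Ls : U k -> U k -> R) :
  (forall x, 0 <= mu x) -> is_trans M -> is_trans Ls ->
  (forall x y, mu x * M x y != 0 -> 0 < Ls (r k x) (r k y)) ->
  0 <= KLr (@mg mu k) (@km mu M k) Ls.
Proof.
move=> h1 [h2 h3] [l1 l2] hp; rewrite KLr_blk //.
apply: (@le_trans _ _ (\sum_u \sum_v (Fs mu M u v - mg mu u * Ls u v))).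
  rewrite big1 // => u _; rewrite sumrB Fs_rows // -big_distrr /= l2 mulr1 subrr //.
apply: ler_sum => u _; apply: ler_sum => v _.
have [F0|F0] := eqVneq (Fs mu M u v) 0.
  by rewrite F0 mul0r sub0r oppr_le0; apply: mulr_ge0 => //; apply: mg_ge0.
have [x [y [rx ry hxy]]] := Fs_wit F0.
have hl : 0 < Ls u v by rewrite -rx -ry; apply: hp.
have hk : 0 < km mu M u v by rewrite -rx -ry; apply: km_pos.
have := ln_le_sub1 (divr_gt0 hl hk); rewrite ln_div ?posrE // => hle.
have H : 1 - Ls u v / km mu M u v <= ln (km mu M u v) - ln (Ls u v).
  by lra.
have e : Fs mu M u v = mg mu u * km mu M u v by rewrite mg_km.
rewrite e.
apply: le_trans (ler_wpM2l _ H); last by apply: mulr_ge0 => //; [apply: mg_ge0 | apply: ltW].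
rewrite mulrBr mulr1 -(mulrA (mg mu u)) (mulrC (km mu M u v)) divfK // gt_eqF //.
Qed.

Lemma KL_eq (T' : finType) (mu : T' -> R) M L1 L2 :
  (forall x y, mu x * M x y != 0 -> L1 x y = L2 x y) -> KL mu M L1 = KL mu M L2.
Proof.
move=> h; apply: eq_bigr => x _; apply: eq_bigr => y _.
by case: eqP => // /eqP hxy; rewrite h.
Qed.

Lemma KL_km_fin mu M : (forall x, 0 <= mu x) -> (forall x y, 0 <= M x y) ->
  KL mu M (tens (km mu M)) = (KLr mu M (tens (km mu M)))%:E.
Proof.
move=> h1 h2; apply: KL_fin => x y h; rewrite gt_eqF //.
by apply: prod_pos => k; apply: km_pos.
Qed.

Lemma G_min mu M : (forall x, 0 <= mu x) -> is_trans M ->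
  ereal_inf [set KL mu M (tens Ls) | Ls in
     [set Ls : forall k, U k -> U k -> R | forall k, is_trans (Ls k)]]%classic
  = KL mu M (tens (km mu M)).
Proof.
move=> h1 [h2 h3]; apply: inf_eq.
  exists (kmT mu M); first by move=> k; apply: kmT_trans.
  by apply: KL_eq => x y h; apply: tens_kmT.
move=> _ [Ls hLs <-].
case: (pselect (exists x y, mu x * M x y != 0 /\ tens Ls x y = 0)).
  by move=> [x [y [h hz]]]; rewrite (KL_inf h hz) leey.
move=> nh.
have hp : forall x y, mu x * M x y != 0 -> forall k, 0 < Ls k (r k x) (r k y).
  move=> x y h k; rewrite lt0r (proj1 (hLs k)) andbT; apply/negP => /eqP z.
  apply: nh; exists x, y; split => //; rewrite /tens (bigD1 k) //= z mul0r //.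
rewrite KL_km_fin // KL_fin; last first.
  by move=> x y h; rewrite gt_eqF //; apply: prod_pos => k; apply: hp.
rewrite lee_fin (pyth (Ls:=Ls)) // lerDl; apply: sumr_ge0 => k _; apply: gibbs => //.
by move=> x y h; apply: hp.
Qed.

End Blocks.

Lemma sum_comp (T U1 U2 : finType) (r1 : T -> U1) (g : U1 -> U2) (f : T -> R) u :
  \sum_(x | g (r1 x) == u) f x = \sum_(w | g w == u) \sum_(x | r1 x == w) f x.
Proof.
rewrite (partition_big r1 (fun w => g w == u)) //=; apply: eq_bigr => w /eqP gw.
apply: eq_bigl => x; case: (eqVneq (r1 x) w) => [->|]; rewrite ?gw ?eqxx ?andbF //.
Qed.

Lemma FsComp (T K1 K2 : finType) (U1 : K1 -> finType) (U2 : K2 -> finType)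
  (r1 : forall k, T -> U1 k) (r2 : forall k, T -> U2 k) k1 k2
  (g : U1 k1 -> U2 k2) (mu : T -> R) M :
  (forall x, r2 k2 x = g (r1 k1 x)) -> forall u v,
  Fs r2 mu M u v = \sum_(w | g w == u) \sum_(z | g z == v) Fs r1 mu M w z.
Proof.
move=> hr u v; rewrite /Fs.
rewrite (eq_bigl (fun x => g (r1 k1 x) == u)); last by move=> x; rewrite hr.
rewrite sum_comp; apply: eq_bigr => w _.
rewrite [RHS]exchange_big /=; apply: eq_bigr => x _.
rewrite (eq_bigl (fun y => g (r1 k1 y) == v)); last by move=> y; rewrite hr.
by rewrite sum_comp.
Qed.

Lemma MgComp (T K1 K2 : finType) (U1 : K1 -> finType) (U2 : K2 -> finType)
  (r1 : forall k, T -> U1 k) (r2 : forall k, T -> U2 k) k1 k2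
  (g : U1 k1 -> U2 k2) (mu : T -> R) :
  (forall x, r2 k2 x = g (r1 k1 x)) -> forall u,
  mg r2 mu u = \sum_(w | g w == u) mg r1 mu w.
Proof.
move=> hr u; rewrite /mg.
rewrite (eq_bigl (fun x => g (r1 k1 x) == u)); last by move=> x; rewrite hr.
by rewrite [LHS](sum_comp (r1 k1)).
Qed.

Lemma KLr_extL (T : finType) (mu : T -> R) M L1 L2 :
  (forall x y, L1 x y = L2 x y) -> KLr mu M L1 = KLr mu M L2.
Proof. by move=> h; apply: eq_bigr => x _; apply: eq_bigr => y _; rewrite h. Qed.

Lemma KLr_extM (T : finType) (mu : T -> R) M1 M2 L :
  (forall x y, M1 x y = M2 x y) -> KLr mu M1 L = KLr mu M2 L.
Proof. by move=> h; apply: eq_bigr => x _; apply: eq_bigr => y _; rewrite h. Qed.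

Lemma KLr_self (T : finType) (mu : T -> R) M : KLr mu M M = 0.
Proof.
apply: big1 => x _; apply: big1 => y _.
have [->|h] := eqVneq (M x y) 0; first by rewrite mulr0 mul0r.
by rewrite divff // ln1 mulr0.
Qed.

Section Main.
Variables (d n : nat) (X : 'I_d -> finType) (S : 'I_n -> {set 'I_d}).
Variable blk : 'I_d -> 'I_n.
Variable blkP : forall j, j \in S (blk j).
Variable blkU : forall i j, j \in S i -> blk j = i.

Definition rB : forall i : 'I_n, prodT X -> XS X (S i) := fun i x => restr (S i) x.
Definition rC : forall j : 'I_d, prodT X -> X j := fun j x => x j.

Lemma restrE (A : {set 'I_d}) (x : prodT X) (k : subT A) : restr A x k = x (val k).
Proof. by rewrite /restr ffunE. Qed.

Lemma regroup (F : 'I_d -> R) :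
  \prod_j F j = \prod_i \prod_(k : subT (S i)) F (val k).
Proof.
rewrite (partition_big blk predT) //=; apply: eq_bigr => i _.
rewrite -(big_sub (S i) (fun j => F j)); apply: eq_bigl => j /=.
apply/eqP/idP => [<-|h]; [exact: blkP | exact: blkU].
Qed.

Definition phiF (y : prodT X) : {dffun forall i, XS X (S i)} :=
  [ffun i => restr (S i) y].
Definition psiF (f : {dffun forall i, XS X (S i)}) : prodT X :=
  [ffun j => f (blk j) (exist _ j (blkP j))].

Lemma phiF_bij : bijective phiF.
Proof.
exists psiF.
  by move=> y; apply/ffunP => j; rewrite /psiF /phiF !ffunE.
move=> f; apply/ffunP => i; apply/ffunP => k; rewrite /psiF /phiF !ffunE.
have gen : forall i' (H : val k \in S i'), i' = i ->
  f i' (exist (fun j => j \in S i') (val k) H) = f i k.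
  move=> i' H e; subst i'; case: k H => j hj H /=.
  by rewrite (bool_irrelevance H hj).
exact: gen (blkU (valP k)).
Qed.

Lemma factor (g : forall i, XS X (S i) -> R) :
  \sum_(y : prodT X) \prod_i g i (restr (S i) y) = \prod_i \sum_z g i z.
Proof.
rewrite -prod_sum_dep (reindex phiF); last exact/onW_bij/phiF_bij.
by apply: eq_bigr => y _; apply: eq_bigr => i _; rewrite /phiF ffunE.
Qed.

Section Fiber.
Variables (i0 : 'I_n) (z0 : XS X (S i0)).

Definition cI (j : 'I_d) (a : X j) : bool :=
  match (j \in S i0) =P true with
  | ReflectT h => a == z0 (exist (fun j => j \in S i0) j h)
  | ReflectF _ => true
  end.

Definition CI i (w : XS X (S i)) : R := \prod_(k : subT (S i)) (cI (w k))%:R.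

Lemma cI_in j (h : j \in S i0) a : cI a = (a == z0 (exist (fun j => j \in S i0) j h)).
Proof. by rewrite /cI; case: eqP => [h'|]; [rewrite (bool_irrelevance h' h) | rewrite h]. Qed.

Lemma cI_out j (h : j \notin S i0) (a : X j) : cI a = true.
Proof. by rewrite /cI; case: eqP => // h'; move: h; rewrite h'. Qed.

Lemma CI_i0 (w : XS X (S i0)) : CI w = (w == z0)%:R.
Proof.
rewrite /CI; have [->|ne] := eqVneq w z0.
  by apply: big1 => -[j hj] _; rewrite (cI_in (h:=hj)) eqxx.
have [k hk] : exists k, w k != z0 k.
  by apply/existsP; apply: contraNT ne => /existsPn h; apply/eqP/ffunP => k; apply/eqP; have := h k; rewrite negbK.
rewrite (bigD1 k) //=; case: k hk => j hj hk.
by rewrite (cI_in (h:=hj)) (negbTE hk) mul0r.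
Qed.

Lemma CI_out i (w : XS X (S i)) : i != i0 -> CI w = 1.
Proof.
move=> ne; apply: big1 => k _; rewrite cI_out //.
by apply: contra ne => h; rewrite -(blkU h) (blkU (valP k)).
Qed.

Lemma fiber (g : forall i, XS X (S i) -> R) :
  \sum_(y | restr (S i0) y == z0) \prod_i g i (restr (S i) y) =
  g i0 z0 * \prod_(i | i != i0) \sum_z g i z.
Proof.
rewrite big_mkcond /=.
rewrite (eq_bigr (fun y => \prod_i (g i (restr (S i) y) * CI (restr (S i) y)))); last first.
  move=> y _; rewrite big_split /= [X in _ = _ * X](bigD1 i0) //= CI_i0.
  rewrite [X in _ = _ * (_ * X)]big1 ?mulr1; last by move=> i ne; rewrite CI_out.
  by case: eqP; rewrite ?mulr1 ?mulr0.
have := factor (fun i w => g i w * CI w); rewrite /= => ->.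
rewrite (bigD1 i0) //=; congr (_ * _).
  rewrite (bigD1 z0) //= CI_i0 eqxx mulr1 big1 ?addr0 // => z ne.
  by rewrite CI_i0 (negbTE ne) mulr0.
by apply: eq_bigr => i ne; apply: eq_bigr => z _; rewrite CI_out // mulr1.
Qed.

End Fiber.

Section Prob.
Variables (pi : prodT X -> R) (P : prodT X -> prodT X -> R).
Variable pi_pos : forall x, 0 < pi x.
Variable pi_sum : \sum_x pi x = 1.
Variable P_trans : is_trans P.

Let pi_ge0 x : 0 <= pi x. Proof. exact: ltW. Qed.
Let P_ge0 : forall x y, 0 <= P x y. Proof. by case: P_trans. Qed.
Let P_rows : forall x, \sum_y P x y = 1. Proof. by case: P_trans. Qed.

Definition Qb i : XS X (S i) -> XS X (S i) -> R := @km _ _ _ rB pi P i.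
Definition TT : prodT X -> prodT X -> R := tens rB Qb.
Definition rS i : forall k : subT (S i), XS X (S i) -> X (val k) := fun k z => z k.
Definition Pj : forall j, X j -> X j -> R := @km _ _ _ rC pi P.
Definition Li i : XS X (S i) -> XS X (S i) -> R := tens (rS (i:=i)) (fun k => @Pj (val k)).

Lemma ex_x0 : exists x0 : prodT X, true.
Proof.
case: (pickP (@predT (prodT X))) => [x _|h]; first by exists x.
by move: pi_sum; rewrite big_pred0 // => /esym/eqP; rewrite oner_eq0.
Qed.

Lemma mgB_pos i (w : XS X (S i)) : 0 < mg rB pi w.
Proof.
have [x0 _] := ex_x0.
have := fiber w (fun _ _ => 1).
move=> hf; rewrite big1_eq in hf.
have hpos : 0 < \sum_(y | restr (S i) y == w) (1 : R).
  rewrite hf mul1r; apply: prodr_gt0 => i' _.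
  apply: (@lt_le_trans _ _ 1) => //.
  by apply: (@sum_ge_term _ predT (fun _ => 1) (restr (S i') x0)).
case: (pickP (fun y => restr (S i) y == w)) => [y /eqP hy|h].
  by apply: (lt_le_trans (pi_pos y)); rewrite -hy; exact: (mg_ge rB i y pi_ge0).
by move: hpos; rewrite big_pred0 // ltxx.
Qed.

Lemma Qb_trans i : is_trans (@Qb i).
Proof.
split; first by move=> u v; apply: km_ge0.
by move=> u; apply: km_rows => //; rewrite gt_eqF // mgB_pos.
Qed.

Lemma TT_trans : is_trans TT.
Proof.
split.
  by move=> x y; apply: prodr_ge0 => i _; apply: km_ge0.
move=> x; have := factor (fun i z => Qb (restr (S i) x) z); rewrite /= => h.
rewrite /TT /tens /rB h; apply: big1 => i _; by case: (Qb_trans i).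
Qed.

Lemma FsBT i (w z : XS X (S i)) : Fs rB pi TT w z = Fs rB pi P w z.
Proof.
rewrite -(mg_km rB _ _ pi_ge0 P_ge0) /Fs /mg big_distrl /=.
apply: eq_bigr => x /eqP rx; rewrite -big_distrr /=; congr (_ * _).
have := fiber z (fun i' z' => Qb (restr (S i') x) z'); rewrite /= => h.
rewrite /TT /tens /rB h -rx big1 ?mulr1 // => i' _; by case: (Qb_trans i').
Qed.

Lemma kmBT i (w z : XS X (S i)) : km rB pi TT w z = Qb w z.
Proof. by rewrite /Qb /km FsBT. Qed.

Lemma TjPj j (u v : X j) : km rC pi TT u v = Pj u v.
Proof.
rewrite /Pj /km; congr (_ / _).
have hr : forall x, rC j x = (fun w : XS X (S (blk j)) => w (exist _ j (blkP j))) (rB (blk j) x).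
  by move=> x; rewrite /rC /rB restrE.
rewrite (@FsComp _ _ _ _ _ rB rC (blk j) j (fun w : XS X (S (blk j)) => w (exist _ j (blkP j))) pi TT hr).
rewrite (@FsComp _ _ _ _ _ rB rC (blk j) j (fun w : XS X (S (blk j)) => w (exist _ j (blkP j))) pi P hr).
by apply: eq_bigr => w _; apply: eq_bigr => z _; rewrite FsBT.
Qed.

Lemma QikPj i (k : subT (S i)) (u v : X (val k)) :
  km (rS (i:=i)) (mg rB pi (k:=i)) (@Qb i) u v = Pj u v.
Proof.
have hr : forall x, rC (val k) x = (fun w : XS X (S i) => w k) (rB i x).
  by move=> x; rewrite /rC /rB restrE.
rewrite /Pj /km (@FsComp _ _ _ _ _ rB rC i (val k) (fun w : XS X (S i) => w k) pi P hr).
rewrite (@MgComp _ _ _ _ _ rB rC i (val k) (fun w : XS X (S i) => w k) pi hr).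
congr (_ / _); rewrite /Fs /mg /rS.
apply: eq_bigr => w _; apply: eq_bigr => z _.
exact: (mg_km rB w z pi_ge0 P_ge0).
Qed.

Lemma tens_Li x y : tens rB Li x y = tens rC Pj x y.
Proof.
rewrite /tens /Li (regroup (fun j => Pj (x j) (y j))); apply: eq_bigr => i _.
by apply: eq_bigr => k _; rewrite /rB /rS !restrE.
Qed.

Lemma main_res :
  Idep pi P = (Ipart pi P S + Idep pi (tensor (fun i => kmarg pi P (S i))))%E /\
  (Ipart pi P S + Idep pi (tensor (fun i => kmarg pi P (S i))))%E =
  (Ipart pi P S + \sum_(i < n) Idep (marg pi (S i)) (kmarg pi P (S i)))%E.
Proof.
have TT_ge0 : forall x y, 0 <= TT x y by case: TT_trans.
have e1 : Idep pi P = (KLr pi P (tens rC Pj))%:E.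
  transitivity (KL pi P (tens rC (km rC pi P))); first exact: (G_min rC pi_ge0 P_trans).
  exact: (KL_km_fin rC pi_ge0 P_ge0).
have e2 : Ipart pi P S = (KLr pi P (tens rB Qb))%:E.
  transitivity (KL pi P (tens rB (km rB pi P))); first exact: (G_min rB pi_ge0 P_trans).
  exact: (KL_km_fin rB pi_ge0 P_ge0).
have e3 : Idep pi (tensor (fun i => kmarg pi P (S i))) = (KLr pi TT (tens rC Pj))%:E.
  transitivity (KL pi TT (tens rC (km rC pi TT))); first exact: (G_min rC pi_ge0 TT_trans).
  rewrite (KL_km_fin rC pi_ge0 TT_ge0); congr (_%:E); apply: KLr_extL => x y.
  by apply: eq_bigr => j _; rewrite TjPj.
have mg0 i : forall w : XS X (S i), 0 <= mg rB pi w by move=> w; apply: ltW; apply: mgB_pos.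
have e4 i : Idep (marg pi (S i)) (kmarg pi P (S i)) = (KLr (mg rB pi (k:=i)) (@Qb i) (@Li i))%:E.
  transitivity (KL (mg rB pi (k:=i)) (@Qb i) (tens (rS (i:=i)) (km (rS (i:=i)) (mg rB pi (k:=i)) (@Qb i)))).
    exact: (G_min (rS (i:=i)) (mg0 i) (Qb_trans i)).
  have Q0 : forall w z, 0 <= @Qb i w z by case: (Qb_trans i).
  rewrite (KL_km_fin (rS (i:=i)) (mg0 i) Q0); congr (_%:E); apply: KLr_extL => w z.
  by apply: eq_bigr => k _; rewrite QikPj.
have hP : KLr pi P (tens rC Pj) = KLr pi P (tens rB Qb) +
    \sum_i KLr (mg rB pi (k:=i)) (@Qb i) (@Li i).
  transitivity (KLr pi P (tens rB Li)); first by apply: KLr_extL => x y; rewrite tens_Li.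
  apply: pyth => // x y h i; apply: prodr_gt0 => k _; rewrite /rS /rB !restrE.
  exact: (km_pos rC (val k) pi_ge0 P_ge0 h).
have hT : KLr pi TT (tens rC Pj) = \sum_i KLr (mg rB pi (k:=i)) (@Qb i) (@Li i).
  transitivity (KLr pi TT (tens rB Li)); first by apply: KLr_extL => x y; rewrite tens_Li.
  rewrite pyth //; last first.
    move=> x y h i; apply: prodr_gt0 => k _; rewrite /rS /rB !restrE -TjPj.
    exact: (km_pos rC (val k) pi_ge0 TT_ge0 h).
  rewrite (@KLr_extL _ pi TT _ TT); last first.
    by move=> x y; apply: eq_bigr => i _; rewrite kmBT.
  rewrite KLr_self add0r; apply: eq_bigr => i _; apply: KLr_extM => w z; exact: kmBT.
rewrite e1 e2 e3 (eq_bigr _ (fun i _ => e4 i)) sumEFin. by rewrite hT hP EFinD.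
Qed.

End Prob.

End Main.

End Gen.

Unset Implicit Arguments. Set Strict Implicit.

Theorem corollary2p25 (R : realType) (d : nat) (X : 'I_d -> finType)
  (n : nat) (S : 'I_n -> {set 'I_d})
  (pi : prodT X -> R) (P : prodT X -> prodT X -> R) :
  is_partition S -> is_distr pi -> is_pos pi -> is_trans P ->
  Idep pi P = (Ipart pi P S + Idep pi (tensor (fun i => kmarg pi P (S i))))%E /\
  (Ipart pi P S + Idep pi (tensor (fun i => kmarg pi P (S i))))%E =
  (Ipart pi P S + \sum_(i < n) Idep (marg pi (S i)) (kmarg pi P (S i)))%E.
Proof.
move=> [hne [hdis hcov]] [hpi0 hsum] hpos hP.
pose blk j := xchoose (hcov j).
have blkP j : j \in S (blk j) := xchooseP (hcov j).
have blkU i j : j \in S i -> blk j = i.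
  move=> h; apply/eqP; apply: contraT => ne.
  by have := disjointFr (hdis _ _ ne) (blkP j); rewrite h.
exact: (main_res blkP blkU hpos hsum hP).
Qed.
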